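(* Let $G$ be a $3$-connected $\Delta$-regular graph. If $\alpha$ and $\beta$ are unfrozen $(\Delta+1)$-colourings of $G$, then $\alpha\sim\beta$.
   Context: A $(\Delta+1)$-colouring is an $L$-colouring for the list-assignment $L(v)=\{1,\ldots,\Delta+1\}$ for all $v$, i.e. a proper colouring with colours in $\{1,\ldots,\Delta+1\}$. A vertex $v$ is frozen under a colouring $\varphi$ if every colour of $L(v)\setminus\{\varphi(v)\}$ appears on a neighbour of $v$; a colouring is unfrozen if at least one vertex is not frozen. $\alpha\sim\beta$ means $\alpha$ can be transformed into $\beta$ by a sequence of single-vertex recolouring steps, each keeping the colouring a proper $(\Delta+1)$-colouring. *)

(* Defs.v *)
From mathcomp Require Import all_boot.
Set Implicit Arguments. Unset Strict Implicit. Unset Printing Implicit Defensive.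

Definition simple_graph (T : finType) (e : rel T) : Prop :=
  symmetric e /\ irreflexive e.

Definition degree (T : finType) (e : rel T) (v : T) : nat := #|[set w | e v w]|.

Definition regular (T : finType) (e : rel T) (D : nat) : Prop :=
  forall v : T, degree e v = D.

Definition del_rel (T : finType) (e : rel T) (S : {set T}) : rel T :=
  fun u v => [&& e u v, u \notin S & v \notin S].

Definition k_connected (T : finType) (e : rel T) (k : nat) : Prop :=
  k < #|T| /\
  forall S : {set T}, #|S| < k ->
    forall x y : T, x \notin S -> y \notin S -> connect (del_rel e S) x y.

Definition proper_colouring (T : finType) (e : rel T) (D : nat) (c : {ffun T -> 'I_D.+1}) : bool :=
  [forall u, forall v, e u v ==> (c u != c v)].

(* Lists L(v) are all of 'I_D.+1; v frozen if every other colour appears on a neighbour. *)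
Definition frozen_at (T : finType) (e : rel T) (D : nat) (c : {ffun T -> 'I_D.+1}) (v : T) : bool :=
  [forall a : 'I_D.+1, (a != c v) ==> [exists w, e v w && (c w == a)]].

Definition unfrozen (T : finType) (e : rel T) (D : nat) (c : {ffun T -> 'I_D.+1}) : bool :=
  [exists v, ~~ frozen_at e c v].

Definition recolour_step (T : finType) (e : rel T) (D : nat) : rel {ffun T -> 'I_D.+1} :=
  fun a b => [&& proper_colouring e a, proper_colouring e b & #|[set v | a v != b v]| == 1].

Definition reconf (T : finType) (e : rel T) (D : nat) (a b : {ffun T -> 'I_D.+1}) : bool :=
  connect (@recolour_step T e D) a b.

(* Main.v *)
Require Import Defs.
From mathcomp Require Import all_boot zify.
Set Implicit Arguments. Unset Strict Implicit. Unset Printing Implicit Defensive.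

Section Recol.
Variables (T : finType) (e : rel T) (D : nat).
Hypothesis esymm : symmetric e.
Hypothesis eirr : irreflexive e.
Hypothesis ereg : regular e D.

Notation col := {ffun T -> 'I_D.+1}.

Definition prop_on (S : {set T}) (c : col) :=
  [forall u, forall v, ((u \in S) && (v \in S) && e u v) ==> (c u != c v)].

Lemma prop_onP (S : {set T}) (c : col) : reflect (forall u v, u \in S -> v \in S -> e u v -> c u != c v) (prop_on S c).
Proof.
apply: (iffP forallP) => [H u v uS vS euv | H u].
  by move: (H u) => /forallP /(_ v); rewrite uS vS euv.
by apply/forallP => v; apply/implyP => /andP [/andP [uS vS] euv]; apply: H.
Qed.

Lemma prop_on_sub (S S' : {set T}) (c : col) : S' \subset S -> prop_on S c -> prop_on S' c.
Proof.
move=> /subsetP sub /prop_onP H; apply/prop_onP => u v uS vS; apply: H; exact: sub.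
Qed.

Lemma proper_onT (c : col) : proper_colouring e c = prop_on setT c.
Proof.
apply/idP/idP.
  move=> /forallP H; apply/prop_onP => u v _ _ euv.
  by move: (H u) => /forallP /(_ v) /implyP; apply.
move=> /prop_onP H; apply/forallP => u; apply/forallP => v; apply/implyP => euv.
exact: H.
Qed.

Definition agree (F : {set T}) (phi c : col) := [forall x in F, c x == phi x].

Lemma agreeP (F : {set T}) (phi c : col) : reflect (forall x, x \in F -> c x = phi x) (agree F phi c).
Proof.
apply: (iffP forall_inP) => H x xF; first by apply/eqP; apply: H.
by rewrite H.
Qed.

Definition diff1 (a b : col) := #|[set v | a v != b v]| == 1.

Definition stepF (S F : {set T}) (phi : col) : rel col := fun a b =>
  [&& prop_on S a, prop_on S b, agree F phi a, agree F phi b & diff1 a b].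

Lemma free_colour (C : {set 'I_D.+1}) : #|C| <= D -> exists d, d \notin C.
Proof.
move=> H; case: (boolP [exists d, d \notin C]) => [/existsP //|/existsPn Hn].
have : [set: 'I_D.+1] \subset C by apply/subsetP => d _; move: (Hn d); rewrite negbK.
by move/subset_leq_card; rewrite cardsT card_ord => H2; move: (leq_trans H2 H); rewrite ltnn.
Qed.

Definition upd (c : col) v d : col := [ffun u => if u == v then d else c u].

Lemma upd_diff1 (c : col) v (d : 'I_D.+1) : d != c v -> diff1 c (upd c v d).
Proof.
move=> Hd; apply/cards1P; exists v; apply/setP => u; rewrite !inE ffunE.
case: (eqVneq u v) => [->|uv]; first by rewrite eq_sym Hd.
by rewrite eqxx.
Qed.

Lemma prop_on_ext (S : {set T}) v (b b' : col) : prop_on (S :\ v) b ->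
  (forall u, u != v -> b' u = b u) ->
  (forall u, u \in S -> e v u -> b' u != b' v) -> prop_on S b'.
Proof.
move=> /prop_onP Hb Hbb Hv; apply/prop_onP => x y xS yS exy.
case: (eqVneq x v) => [xv|xv].
  subst x; rewrite eq_sym; exact: Hv.
case: (eqVneq y v) => [yv|yv].
  subst y; apply: Hv => //; by rewrite esymm.
rewrite !Hbb //; apply: Hb => //; by rewrite !inE ?xv ?yv.
Qed.


Definition nbF (A : {set T}) v := [set w in A | e v w].

Lemma setD1U (F U : {set T}) v : v \notin F -> (F :|: U) :\ v = F :|: (U :\ v).
Proof.
move=> vF; apply/setP => w; rewrite !inE.
by case: (eqVneq w v) => [->|]; rewrite ?(negbTE vF) //= orbF.
Qed.

Lemma card_nbF_le (F U : {set T}) v :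
  [disjoint F & U] -> #|nbF F v| + #|nbF U v| <= D.
Proof.
move=> dFU; rewrite -(ereg v) /degree.
have -> : #|nbF F v| + #|nbF U v| = #|nbF F v :|: nbF U v|.
  rewrite cardsU; have -> : nbF F v :&: nbF U v = set0.
    apply/setP => w; rewrite !inE; case wF: (w \in F) => //=.
    by rewrite (disjointFr dFU wF) andbF.
  by rewrite cards0 subn0.
apply: subset_leq_card; apply/subsetP => w; rewrite !inE.
by case/orP => /andP [].
Qed.

Lemma peel_exist (F : {set T}) (phi : col) (ban : T -> {set 'I_D.+1})
    (fam : {set T} -> Prop) :
  (forall U, fam U -> U != set0 -> exists2 v, v \in U &
      (#|ban v :|: phi @: nbF F v| + #|nbF U v| <= D) /\ fam (U :\ v)) ->
  prop_on F phi ->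
  forall U, fam U -> [disjoint F & U] ->
  exists c : col, [/\ prop_on (F :|: U) c, agree F phi c &
                     forall u, u \in U -> c u \notin ban u].
Proof.
move=> Hfam HF U; move Hn: #|U| => n; elim: n U Hn => [|n IH] U Hn fU dFU.
  have -> : U = set0 by apply/eqP; rewrite -cards_eq0 Hn.
  exists phi; split; first by rewrite setU0.
    by apply/agreeP.
  by move=> u; rewrite inE.
have U0 : U != set0 by rewrite -card_gt0 Hn.
case: (Hfam U fU U0) => v vU [Hc fU'].
have vF : v \notin F by apply/negP => vF; move: (disjointFr dFU vF); rewrite vU.
have cU' : #|U :\ v| = n by move: Hn; rewrite (cardsD1 v U) vU add1n => [[]].
have [c' [Hp /agreeP Ha Hb]] := IH (U :\ v) cU' fU' (disjointWr (subD1set U v) dFU).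
set C := ban v :|: [set c' w | w in nbF (F :|: (U :\ v)) v].
have HC : #|C| <= D.
  apply: leq_trans Hc.
  have sub : C \subset (ban v :|: phi @: nbF F v) :|: c' @: nbF U v.
    apply/subsetP => d; rewrite !inE; case/orP => [->//|/imsetP [w]].
    rewrite !inE => /andP [wFU evw] ->.
    case wF: (w \in F).
      by rewrite Ha // imset_f ?orbT // inE wF evw.
    move: wFU; rewrite wF /= => /andP [_ wU].
    by rewrite imset_f ?orbT // inE wU evw.
  apply: (leq_trans (subset_leq_card sub)); apply: (leq_trans (leq_card_setU _ _)).
  by rewrite leq_add2l leq_imset_card.
case: (free_colour HC) => d dC.
exists (upd c' v d); split.
- apply: (prop_on_ext (b := c') (v := v)); first by rewrite setD1U.
    by move=> u uv; rewrite ffunE (negbTE uv).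
  move=> u uFU evu; rewrite !ffunE eqxx.
  have uv : u != v by apply/negP => /eqP uv; subst u; rewrite eirr in evu.
  rewrite (negbTE uv); apply/negP => /eqP cu; move: dC; rewrite -cu inE.
  by rewrite imset_f ?orbT // inE -setD1U // in_setD1 uv uFU evu.
- apply/agreeP => u uF; rewrite ffunE.
  have uv : u != v by apply/negP => /eqP uv; subst u; rewrite uF in vF.
  by rewrite (negbTE uv) Ha.
- move=> u uU; rewrite ffunE; case: (eqVneq u v) => [->|uv]; rewrite ?eqxx.
    by apply/negP => dban; move: dC; rewrite inE dban.
  by apply: Hb; rewrite !inE uv.
Qed.


Lemma diff1_only (a b : col) w : a w != b w -> (forall u, u != w -> a u = b u) -> diff1 a b.
Proof.
move=> Hw Ho; apply/cards1P; exists w; apply/setP => u; rewrite !inE.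
case: (eqVneq u w) => [->|uw]; first by rewrite Hw.
by rewrite Ho // eqxx.
Qed.

Lemma diff1_elim (a b : col) : diff1 a b -> exists w, a w != b w /\ (forall u, u != w -> a u = b u).
Proof.
case/cards1P => w Hw; exists w; split.
  by move: (set11 w); rewrite -Hw inE.
move=> u uw; have : u \notin [set w] by rewrite inE.
by rewrite -Hw inE negbK => /eqP.
Qed.

Lemma base_reconf (S F : {set T}) (phi a b : col) :
  prop_on S a -> prop_on S b -> agree F phi a -> agree F phi b ->
  (forall u, u \in S -> a u = b u) -> connect (stepF S F phi) a b.
Proof.
move Hn : #|[set v | a v != b v]| => n.
elim: n a Hn => [|n IH] a Hn pa pb aa ab Hab.
  have -> // : a = b; apply/ffunP => u; apply/eqP; apply/negPn/negP => H.
  have : 0 < #|[set v | a v != b v]| by apply/card_gt0P; exists u; rewrite inE.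
  by rewrite Hn.
have : [set v | a v != b v] != set0 by rewrite -card_gt0 Hn.
case/set0Pn => w; rewrite inE => Hw.
have wS : w \notin S by apply/negP => wS; rewrite Hab ?eqxx in Hw.
set a1 := upd a w (b w).
have pa1 : prop_on S a1.
  apply/prop_onP => x y xS yS exy; rewrite !ffunE.
  have xw : x != w by apply: contraNneq wS => <-.
  have yw : y != w by apply: contraNneq wS => <-.
  by rewrite (negbTE xw) (negbTE yw); move/prop_onP: pa; apply.
have aa1 : agree F phi a1.
  apply/agreeP => x xF; rewrite ffunE; case: eqP => [xw|_].
    by rewrite -xw; move/agreeP: ab; apply.
  by move/agreeP: aa; apply.
apply: (@connect_trans _ _ a1).
  apply: connect1; rewrite /stepF pa pa1 aa aa1 /=; apply: upd_diff1; by rewrite eq_sym.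
apply: IH => //.
  have -> : [set v | a1 v != b v] = [set v | a v != b v] :\ w.
    apply/setP => u; rewrite !inE ffunE.
    by case: (eqVneq u w) => [->|uw]; rewrite ?eqxx.
  by move: Hn; rewrite (cardsD1 w) inE Hw add1n => [[]].
move=> u uS; rewrite ffunE; case: (eqVneq u w) => [->//|_]; exact: Hab.
Qed.

Section Lift.
Variables (F U : {set T}) (phi : col) (v : T).
Hypothesis dFU : [disjoint F & U].
Hypothesis vU : v \in U.
Hypothesis Cv : #|phi @: nbF F v| + #|nbF U v| < D.

Let vF : v \notin F.
Proof. by apply/negP => vF; move: (disjointFr dFU vF); rewrite vU. Qed.

Let S := F :|: U.
Let S' := F :|: (U :\ v).
Let SS' : S' = S :\ v.
Proof. by rewrite /S /S' setD1U. Qed.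

Lemma agree_off (a a' : col) : agree F phi a -> (forall u, u != v -> a' u = a u) -> agree F phi a'.
Proof.
move=> /agreeP aa H; apply/agreeP => x xF; rewrite H ?aa //.
by apply: contraNneq vF => <-.
Qed.

Lemma lift_step (a b a' : col) : stepF S' F phi a b ->
  (forall u, u != v -> a' u = a u) -> prop_on S a' ->
  exists b' : col, [/\ forall u, u != v -> b' u = b u, prop_on S b' &
                      connect (stepF S F phi) a' b'].
Proof.
case/and5P => pa pb aa ab /diff1_elim [w [Hw Hab]] Ha' pa'.
have aa' := agree_off aa Ha'.
case: (eqVneq w v) => [wv|wv].
  exists a'; split => //.
  by move=> u uv; rewrite Ha' // Hab // wv.
set c := b w.
have [a'' [Ha'' pa'' Hv connA]] : exists a'' : col,
    [/\ forall u, u != v -> a'' u = a' u, prop_on S a'',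
        (w \in S) && e v w -> a'' v != c & connect (stepF S F phi) a' a''].
  case: (boolP ((w \in S) && e v w && (a' v == c))) => Hconf; last first.
    exists a'; split => //; move=> Hw'; by move: Hconf; rewrite Hw' /=.
  set C := c |: [set a' x | x in nbF S v].
  have HC : #|C| <= D.
    have sub : [set a' x | x in nbF S v] \subset phi @: nbF F v :|: a' @: nbF U v.
      apply/subsetP => d /imsetP [x]; rewrite !inE => /andP [xS evx] ->.
      case xF: (x \in F).
        by move/agreeP: aa' => ->//; rewrite imset_f // inE xF evx.
      move: xS; rewrite xF /= => xU.
      by rewrite imset_f ?orbT // inE xU evx.
    have H1 : #|[set a' x | x in nbF S v]| <= #|phi @: nbF F v| + #|nbF U v|.
      apply: (leq_trans (subset_leq_card sub)); apply: (leq_trans (leq_card_setU _ _)).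
      by rewrite leq_add2l leq_imset_card.
    rewrite cardsU1; apply: leq_trans (leq_add (leq_b1 _) H1) _; by rewrite add1n.
  case: (free_colour HC) => d dC.
  have av : a' v = c by move: Hconf => /andP [_ /eqP].
  have dc : d != c by apply: contraNneq dC => ->; rewrite setU11.
  have pu : prop_on S (upd a' v d).
    apply: (prop_on_ext (b := a') (v := v)).
    - exact: prop_on_sub (subD1set S v) pa'.
    - by move=> u uv; rewrite ffunE (negbTE uv).
    move=> u uS evu; rewrite !ffunE eqxx.
    have uv : u != v by apply/negP => /eqP uv; subst u; rewrite eirr in evu.
    rewrite (negbTE uv); apply: contraNneq dC => <-.
    by rewrite setU1r // imset_f // inE uS evu.
  exists (upd a' v d); split => //.
  - by move=> u uv; rewrite ffunE (negbTE uv).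
  - by move=> _; rewrite ffunE eqxx.
  apply: connect1; rewrite /stepF pa' pu aa' /=.
  rewrite (agree_off aa' (a' := upd a' v d)) /=; last by move=> u uv; rewrite ffunE (negbTE uv).
  by apply: upd_diff1; rewrite av.
have Hoff : forall u, u != v -> upd a'' w c u = b u.
  move=> u uv; rewrite ffunE; case: (eqVneq u w) => [->//|uw].
  by rewrite Ha'' // Ha' // Hab.
have pb' : prop_on S (upd a'' w c).
  apply: (prop_on_ext (b := b) (v := v)); first by rewrite -SS'.
    exact: Hoff.
  move=> u uS evu; have vw : v != w by rewrite eq_sym.
  rewrite !ffunE (negbTE vw).
  case: (eqVneq u w) => [uw|uw].
    by rewrite eq_sym; apply: Hv; rewrite -uw uS evu.
  rewrite eq_sym; move/prop_onP: pa''; apply => //; by rewrite /S inE vU orbT.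
exists (upd a'' w c); split => //.
apply: (connect_trans connA); apply: connect1.
rewrite /stepF pa'' pb' (agree_off aa' Ha'') (agree_off ab Hoff) /=.
apply: upd_diff1; rewrite Ha'' // Ha' //; by rewrite eq_sym.
Qed.



Lemma lift_path (a b a' : col) : connect (stepF S' F phi) a b ->
  (forall u, u != v -> a' u = a u) -> prop_on S a' ->
  exists b' : col, [/\ forall u, u != v -> b' u = b u, prop_on S b' &
                      connect (stepF S F phi) a' b'].
Proof.
case/connectP => p Hp ->{b}.
elim: p a a' Hp => [|x p IH] a a' /= Hp Ha' pa'.
  by exists a'; split.
move/andP: Hp => [st Hp].
have [b1 [H1 p1 c1]] := lift_step st Ha' pa'.
have [b2 [H2 p2 c2]] := IH x b1 Hp H1 p1.
by exists b2; split => //; apply: connect_trans c1 c2.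
Qed.

End Lift.

Lemma peel_reconf (F : {set T}) (phi : col) (fam : {set T} -> Prop) :
  (forall U, fam U -> U != set0 -> exists2 v, v \in U &
      (#|phi @: nbF F v| + #|nbF U v| < D) /\ fam (U :\ v)) ->
  forall U, fam U -> [disjoint F & U] ->
  forall a b : col, prop_on (F :|: U) a -> prop_on (F :|: U) b ->
  agree F phi a -> agree F phi b -> connect (stepF (F :|: U) F phi) a b.
Proof.
move=> Hfam U; move Hn: #|U| => n; elim: n U Hn => [|n IH] U Hn fU dFU a b pa pb aa ab.
  have U0 : U = set0 by apply/eqP; rewrite -cards_eq0 Hn.
  apply: base_reconf => // u; rewrite U0 setU0 => uF.
  by move/agreeP: aa => ->//; move/agreeP: ab => ->.
have U0 : U != set0 by rewrite -card_gt0 Hn.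
case: (Hfam U fU U0) => v vU [Hc fU'].
have vF : v \notin F by apply/negP => vF; move: (disjointFr dFU vF); rewrite vU.
have cU' : #|U :\ v| = n by move: Hn; rewrite (cardsD1 v U) vU add1n => [[]].
have sub : F :|: (U :\ v) \subset F :|: U by apply: setUS; apply: subD1set.
have := IH (U :\ v) cU' fU' (disjointWr (subD1set U v) dFU) a b
  (prop_on_sub sub pa) (prop_on_sub sub pb) aa ab.
move/(lift_path dFU vU Hc) => /(_ a (fun _ _ => erefl) pa) [b' [Hb' pb' cb']].
apply: (connect_trans cb').
case: (eqVneq (b' v) (b v)) => [E|NE].
  have -> : b' = b by apply/ffunP => u; case: (eqVneq u v) => [->//|]; exact: Hb'.
  exact: connect0.
apply: connect1; rewrite /stepF pb' pb ab /=.
rewrite (agree_off dFU vU ab Hb') /=.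
exact: diff1_only NE Hb'.
Qed.


Lemma card_nbF_U (F U : {set T}) v :
  [disjoint F & U] -> #|nbF F v| + #|nbF U v| = #|nbF (F :|: U) v|.
Proof.
move=> dFU.
have -> : nbF (F :|: U) v = nbF F v :|: nbF U v.
  by apply/setP => w; rewrite !inE andb_orl.
rewrite cardsU; have -> : nbF F v :&: nbF U v = set0.
  apply/setP => w; rewrite !inE; case wF: (w \in F) => //=.
  by rewrite (disjointFr dFU wF) andbF.
by rewrite cards0 subn0.
Qed.

Lemma card_nbF_T v : #|nbF setT v| = D.
Proof. by rewrite -(ereg v) /degree; apply: eq_card => w; rewrite !inE. Qed.

Lemma boundary (F U : {set T}) r u : r \notin F -> r \notin U -> u \in U ->
  connect (del_rel e F) r u ->
  exists2 v, v \in U & exists w, [&& e v w, w \notin U & w \notin F].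
Proof.
move=> rF rU uU /connectP [p Hp Hu].
elim: p r rF rU Hp Hu => [|x p IH] r rF rU /= Hp Hu.
  by subst u; rewrite uU in rU.
move/andP: Hp => [/and3P [erx _ xF] Hp].
case xU: (x \in U).
  by exists x => //; exists r; rewrite esymm erx rU rF.
exact: IH xF (negbT xU) Hp Hu.
Qed.

Lemma boundary_card (F U : {set T}) v w : [disjoint F & U] ->
  e v w -> w \notin U -> w \notin F -> #|nbF F v| + #|nbF U v| < D.
Proof.
move=> dFU evw wU wF; rewrite card_nbF_U // -(card_nbF_T v).
apply: proper_card; apply/properP; split.
  by apply/subsetP => z; rewrite !inE => /andP [_ ->].
by exists w; rewrite !inE ?evw // negb_and negb_or wF wU.
Qed.

Section PairFam.
Variables (F : {set T}) (r : T).
Hypothesis rF : r \notin F.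
Hypothesis conn : forall u, u \notin F -> connect (del_rel e F) r u.

Definition pfam (U : {set T}) := U \subset ~: F /\ (U = ~: F \/ r \notin U).

Lemma pair_fam (cond : {set T} -> T -> Prop) :
  (forall (U : {set T}) v, U \subset ~: F -> v \in U -> #|nbF F v| + #|nbF U v| < D -> cond U v) ->
  cond (~: F) r ->
  forall U, pfam U -> U != set0 -> exists2 v, v \in U & cond U v /\ pfam (U :\ v).
Proof.
move=> Hgen Hr U [sU [->|rU]] U0.
  exists r; first by rewrite inE.
  split => //; split; first exact: subD1set.
  by right; rewrite !inE eqxx.
case/set0Pn: U0 => u uU.
have uF : u \notin F by move/subsetP: sU => /(_ u uU); rewrite inE.
have [v vU [w /and3P [evw wU wF]]] := boundary rF rU uU (conn uF).
have dFU : [disjoint F & U].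
  by rewrite disjoint_sym -[F]setCK -subsets_disjoint.
exists v => //; split; first exact: (Hgen U v sU vU (boundary_card dFU evw wU wF)).
split; first by apply: subset_trans sU; apply: subD1set.
by right; rewrite !inE negb_and rU orbT.
Qed.

End PairFam.


Lemma stepF_sub (F : {set T}) phi : subrel (stepF setT F phi) (connect (recolour_step e (D:=D))).
Proof.
move=> a b /and5P [pa pb _ _ d]; apply: connect1.
by rewrite /recolour_step !proper_onT pa pb.
Qed.

Section Pair.
Variables (x y r : T).
Hypothesis xy : x != y.
Hypothesis nxy : ~~ e x y.
Hypothesis erx : e r x.
Hypothesis ery : e r y.
Let F := [set x; y].
Hypothesis conn : forall u, u \notin F -> connect (del_rel e F) r u.

Let rF : r \notin F.
Proof.
rewrite !inE negb_or; apply/andP; split; apply/negP => /eqP E.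
  by move: erx; rewrite E eirr.
by move: ery; rewrite E eirr.
Qed.

Let nbF_r : nbF F r = F.
Proof.
apply/setP => z; rewrite !inE.
case: (eqVneq z x) => [->|zx] /=; first by rewrite erx.
by case: (eqVneq z y) => [->|zy] /=; first by rewrite ery.
Qed.

Let dF : [disjoint F & ~: F].
Proof. by rewrite -subsets_disjoint subxx. Qed.

Let card_r : #|nbF (~: F) r| + 2 = D.
Proof.
by rewrite -(card_nbF_T r) -(setUCr F) -card_nbF_U // nbF_r /F cards2 xy addnC.
Qed.

Let propF (phi : col) : prop_on F phi.
Proof.
apply/prop_onP => u v /set2P [] -> /set2P [] -> //; rewrite ?eirr //.
  by rewrite (negbTE nxy).
by rewrite esymm (negbTE nxy).
Qed.

Let imF (phi : col) : phi x = phi y -> phi @: F = [set phi x].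
Proof. by move=> E; rewrite imsetU1 imset_set1 E setUid. Qed.

Lemma pair_reconf (g d : col) : proper_colouring e g -> proper_colouring e d ->
  g x = g y -> d x = g x -> d y = g y -> reconf e g d.
Proof.
move=> pg pd gxy dx dy.
have fam := @pair_fam F r rF conn (fun U v => #|g @: nbF F v| + #|nbF U v| < D).
have hfam : forall U, pfam F r U -> U != set0 -> exists2 v, v \in U &
      (#|g @: nbF F v| + #|nbF U v| < D) /\ pfam F r (U :\ v).
  apply: fam.
    move=> U v _ _ H; apply: leq_ltn_trans H; rewrite leq_add2r; exact: leq_imset_card.
  rewrite nbF_r imF // cards1; lia.
have := @peel_reconf F g (pfam F r) hfam (~: F) _ dF g d.
rewrite setUCr -!proper_onT => /(_ _ pg pd) H.
apply: (connect_sub (@stepF_sub F g)); apply: H.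
- by split => //; left.
- by apply/agreeP.
- by apply/agreeP => z /set2P [] ->; rewrite ?dx ?dy.
Qed.

Lemma pair_exist (phi : col) (ban : T -> {set 'I_D.+1}) c1 c2 :
  phi x = phi y ->
  (forall v, #|ban v :|: phi @: nbF F v| <= #|nbF F v| + 1) ->
  ban r :|: [set phi x] \subset [set c1; c2] ->
  exists c : col, [/\ proper_colouring e c, c x = phi x, c y = phi y &
                     forall u, u \notin F -> c u \notin ban u].
Proof.
move=> Exy Hgen Hr.
have fam := @pair_fam F r rF conn
   (fun U v => #|ban v :|: phi @: nbF F v| + #|nbF U v| <= D).
have hfam : forall U, pfam F r U -> U != set0 -> exists2 v, v \in U &
      (#|ban v :|: phi @: nbF F v| + #|nbF U v| <= D) /\ pfam F r (U :\ v).
  apply: fam.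
    move=> U v _ _ H; apply: leq_trans (leq_add (Hgen v) (leqnn _)) _; lia.
  rewrite nbF_r imF //.
  have := subset_leq_card Hr; rewrite cards2 => H.
  have H2 : (c1 != c2).+1 <= 2 by case: (c1 != c2).
  lia.
have [] := @peel_exist F phi ban (pfam F r) hfam (propF phi) (~: F) _ dF.
  by split => //; left.
move=> c [pc /agreeP ac bc]; exists c; split.
- by rewrite proper_onT -(setUCr F).
- by rewrite ac // !inE eqxx.
- by rewrite ac // !inE eqxx orbT.
- by move=> u uF; apply: bc; rewrite inE.
Qed.

End Pair.


Hypothesis k3 : k_connected e 3.

Definition VP x y r := [&& x != y, ~~ e x y, e r x & e r y].

Lemma VP_sym x y r : VP x y r -> VP y x r.
Proof.
by case/and4P => xy nxy erx ery; rewrite /VP eq_sym xy esymm nxy erx ery.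
Qed.

Lemma connVP x y r : VP x y r ->
  forall u, u \notin [set x; y] -> connect (del_rel e [set x; y]) r u.
Proof.
case/and4P => xy nxy erx ery u uF; apply: k3.2 => //.
  by rewrite cards2; case: (x != y).
rewrite !inE negb_or; apply/andP; split; apply/negP => /eqP E.
  by move: erx; rewrite E eirr.
by move: ery; rewrite E eirr.
Qed.

Lemma step_upd (c : col) v d : proper_colouring e c -> d != c v ->
  (forall w, e v w -> c w != d) -> recolour_step e c (upd c v d).
Proof.
move=> pc dv Hw.
have pu : proper_colouring e (upd c v d).
  rewrite proper_onT; apply: (prop_on_ext (b := c) (v := v)).
  - by apply: prop_on_sub (subD1set _ v) _; rewrite -proper_onT.
  - by move=> u uv; rewrite ffunE (negbTE uv).
  move=> u _ evu; rewrite !ffunE eqxx.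
  have uv : u != v by apply/negP => /eqP uv; subst u; rewrite eirr in evu.
  by rewrite (negbTE uv) Hw.
by rewrite /recolour_step pc pu; apply: upd_diff1.
Qed.

Lemma step_proper2 (a b : col) : recolour_step e a b -> proper_colouring e b.
Proof. by case/and3P. Qed.

Lemma pair_class x y r (g d : col) : VP x y r ->
  proper_colouring e g -> proper_colouring e d -> g x = g y -> d x = d y ->
  reconf e g d.
Proof.
move=> vp; have conn := connVP vp; move: vp => /and4P [xy nxy erx ery].
move=> pg pd gxy dxy.
have yx : y != x by rewrite eq_sym.
case: (eqVneq (d x) (g x)) => [E|NE].
  by apply: (pair_reconf xy nxy erx ery conn) => //; rewrite -dxy E.
set a := g x; set b := d x.
set ban := fun v => if e x v || e y v then [set b] else set0.
have Hgen : forall v, #|ban v :|: [ffun=> a] @: nbF [set x; y] v| <= #|nbF [set x; y] v| + 1.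
  move=> v; rewrite /ban; case: (e x v || e y v).
    apply: leq_trans (leq_card_setU _ _) _; rewrite cards1 addnC leq_add2r.
    exact: leq_imset_card.
  by rewrite set0U; apply: leq_trans (leq_imset_card _ _) (leq_addr _ _).
have Hr : ban r :|: [set [ffun=> a] x] \subset [set b; a].
  rewrite /ban esymm erx /= ffunE; apply/subsetP => z; rewrite !inE.
  by case/orP => ->; rewrite ?orbT.
have [g1 [pg1 g1x g1y bg1]] := pair_exist xy nxy erx ery conn
    (phi := [ffun=> a]) (ltac:(by rewrite !ffunE)) Hgen Hr.
rewrite !ffunE in g1x g1y.
have nb : forall w, e x w || e y w -> g1 w != b.
  move=> w H.
  have wF : w \notin [set x; y].
    rewrite !inE negb_or; apply/andP; split; apply/negP => /eqP E; subst w;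
      move: H; rewrite ?eirr ?orbF ?(negbTE nxy) //= ?(esymm y x) ?(negbTE nxy) ?eirr //.
  by move: (bg1 w wF); rewrite /ban H inE.
apply: (connect_trans (y := g1)).
  apply: (pair_reconf xy nxy erx ery conn) => //. by rewrite g1y /a gxy.
set g2 := upd g1 x b.
have s2 : recolour_step e g1 g2.
  apply: step_upd => //; first by rewrite g1x; exact: NE.
  by move=> w exw; apply: nb; rewrite exw.
set g3 := upd g2 y b.
have s3 : recolour_step e g2 g3.
  apply: step_upd; first exact: step_proper2 s2.
    by rewrite /g2 ffunE (negbTE yx) g1y; exact: NE.
  move=> w eyw; rewrite /g2 ffunE.
  have wx : w != x by apply: contraNneq nxy => <-; rewrite esymm.
  by rewrite (negbTE wx); apply: nb; rewrite eyw orbT.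
apply: (connect_trans (connect1 s2)); apply: (connect_trans (connect1 s3)).
have p3 := step_proper2 s3.
apply: (pair_reconf xy nxy erx ery conn) => //.
+ by rewrite /g3 !ffunE !eqxx (negbTE xy).
+ by rewrite /g3 !ffunE !eqxx (negbTE xy).
+ by rewrite /g3 !ffunE eqxx -dxy.
Qed.


Lemma exist_any (F : {set T}) (phi : col) : prop_on F phi ->
  exists c : col, proper_colouring e c /\ agree F phi c.
Proof.
move=> HF.
have dF : [disjoint F & ~: F] by rewrite -subsets_disjoint subxx.
have hfam : forall U : {set T}, U \subset ~: F -> U != set0 -> exists2 v, v \in U &
   (#|(fun _ => set0) v :|: phi @: nbF F v| + #|nbF U v| <= D) /\ (U :\ v \subset ~: F).
  move=> U sU /set0Pn [v vU]; exists v => //; split.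
    rewrite set0U; apply: leq_trans (leq_add (leq_imset_card _ _) (leqnn _)) _.
    have dFU : [disjoint F & U] by rewrite disjoint_sym -[F]setCK -subsets_disjoint.
    rewrite card_nbF_U // -(card_nbF_T v); apply: subset_leq_card.
    by apply/subsetP => z; rewrite !inE => /andP [_ ->].
  exact: subset_trans (subD1set U v) sU.
have [c [pc ac _]] := @peel_exist F phi (fun _ => set0) (fun U => U \subset ~: F) hfam HF (~: F) (subxx _) dF.
by exists c; split => //; rewrite proper_onT -(setUCr F).
Qed.

Lemma D_pos x y r : VP x y r -> 0 < D.
Proof.
case/and4P => _ _ erx _; rewrite -(card_nbF_T r); apply/card_gt0P.
by exists x; rewrite !inE erx.
Qed.

Lemma other_colour (a : 'I_D.+1) : 0 < D -> exists2 c : 'I_D.+1, c != a & True.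
Proof.
move=> D0; have [c cn] := @free_colour [set a] (ltac:(by rewrite cards1)).
by exists c => //; move: cn; rewrite inE.
Qed.

Lemma pair_nonadj x y r u v : VP x y r -> u \in [set x; y] -> v \in [set x; y] -> e u v = false.
Proof.
case/and4P => _ nxy _ _ /set2P [] -> /set2P [] ->; rewrite ?eirr //.
  exact: negbTE.
by rewrite esymm; apply: negbTE.
Qed.

Lemma special s p u q (g : col) : VP s p u -> q != p -> q != s -> e p q -> ~~ e s q ->
  proper_colouring e g -> g s = g p ->
  exists2 d : col, proper_colouring e d /\ d s = d q & reconf e g d.
Proof.
move=> vp qp qs epq nsq pg gsp.
have conn := connVP vp; have D0 := D_pos vp; move: vp => /and4P [sp nsp eus eup].
set a := g s.
have [c ca _] := other_colour a D0.
set ban := fun v => (if e q v && (v != p) then [set a] else set0) :|: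
                    (if e p v then [set c] else set0).
have ban_sub : forall v, ban v \subset [set a; c].
  move=> v; rewrite /ban subUset; apply/andP; split; case: ifP => _;
    by rewrite ?sub0set // sub1set !inE eqxx ?orbT.
have im_sub : forall A : {set T}, [ffun=> a] @: A \subset [set a].
  by move=> A; apply/subsetP => z /imsetP [w _ ->]; rewrite ffunE inE.
have Hgen : forall v, #|ban v :|: [ffun=> a] @: nbF [set s; p] v| <= #|nbF [set s; p] v| + 1.
  move=> v; case: (boolP (nbF [set s; p] v == set0)) => [/eqP E|NE].
    rewrite E imset0 setU0 cards0 add0n.
    have epv : e p v = false.
      apply/negP => epv; have : p \in nbF [set s; p] v by rewrite !inE eqxx orbT esymm epv.
      by rewrite E inE.
    by rewrite /ban epv setU0; case: ifP => _; rewrite ?cards1 ?cards0.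
  have Hs : ban v :|: [ffun=> a] @: nbF [set s; p] v \subset [set a; c].
    by rewrite subUset ban_sub /= (subset_trans (im_sub _)) // sub1set !inE eqxx.
  have H1 := subset_leq_card Hs.
  move: H1; rewrite cards2 -card_gt0 in NE * => H1.
  have H2 : (a != c).+1 <= 2 by case: (a != c).
  by apply: (leq_trans H1); apply: (leq_trans H2); rewrite addn1 ltnS.
have Hr : ban u :|: [set [ffun=> a] s] \subset [set a; c].
  by rewrite subUset ban_sub ffunE sub1set !inE eqxx.
have [g1 [pg1 g1s g1p bg1]] := pair_exist sp nsp eus eup conn
   (phi := [ffun=> a]) (ltac:(by rewrite !ffunE)) Hgen Hr.
rewrite !ffunE in g1s g1p.
have nps : ~~ e p s by rewrite esymm.
have sq : s != q by rewrite eq_sym.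
have c1 : reconf e g g1.
  by apply: (pair_reconf sp nsp eus eup conn) => //; rewrite ?g1s ?g1p /a ?gsp.
have nF : forall w, w != s -> w != p -> w \notin [set s; p].
  by move=> w ws wp; rewrite !inE negb_or ws wp.
set g2 := upd g1 p c.
have s2 : recolour_step e g1 g2.
  apply: step_upd => //; first by rewrite g1p.
  move=> w epw.
  have wp : w != p by apply: contraTneq epw => ->; rewrite eirr.
  have ws : w != s by apply: contraNneq nps => <-.
  apply: contraNneq (bg1 w (nF w ws wp)) => ->.
  by rewrite /ban epw !inE eqxx orbT.
set g3 := upd g2 q a.
have pg2 := step_proper2 s2.
have s3 : recolour_step e g2 g3.
  apply: step_upd => //.
    rewrite /g2 ffunE (negbTE qp).
    move: pg1; rewrite proper_onT => /prop_onP /(_ q p) H.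
    have := H (in_setT _) (in_setT _) (ltac:(by rewrite esymm)).
    by rewrite g1p eq_sym.
  move=> w eqw; rewrite /g2 ffunE.
  case: (eqVneq w p) => [_|wp]; first exact: ca.
  have ws : w != s by apply: contraNneq nsq => <-; rewrite esymm.
  apply: contraNneq (bg1 w (nF w ws wp)) => ->.
  by rewrite /ban eqw wp !inE eqxx.
exists g3.
  split; first exact: step_proper2 s3.
  by rewrite /g3 /g2 !ffunE eqxx (negbTE sq) (negbTE sp) g1s.
rewrite /reconf in c1 *; apply: (connect_trans c1); apply: (connect_trans (connect1 s2)); exact: connect1 s3.
Qed.

Lemma shared s p q u1 u2 (g d : col) : VP s p u1 -> VP s q u2 ->
  proper_colouring e g -> proper_colouring e d -> g s = g p -> d s = d q ->
  reconf e g d.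
Proof.
move=> v1 v2 pg pd gsp dsq.
case: (eqVneq p q) => [pq|pq].
  by apply: (pair_class v1) => //; rewrite pq.
have v1' := v1; have v2' := v2.
move: v1' v2' => /and4P [sp nsp _ _] /and4P [sq nsq _ _].
case epq: (e p q).
  have qp : q != p by rewrite eq_sym.
  have qs : q != s by rewrite eq_sym.
  have [d' [pd' d'sq] c1] := special v1 qp qs epq nsq pg gsp.
  have c2 := pair_class v2 pd' pd d'sq dsq.
  rewrite /reconf in c1 c2 *; exact: connect_trans c1 c2.
have pF : prop_on [set s; p; q] [ffun=> g s].
  apply/prop_onP => x y; rewrite !inE => Hx Hy exy; exfalso.
  move: Hx Hy exy => /orP [/orP [/eqP->|/eqP->]|/eqP->] /orP [/orP [/eqP->|/eqP->]|/eqP->];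
  rewrite ?eirr ?(negbTE nsp) ?(negbTE nsq) ?epq // esymm ?(negbTE nsp) ?(negbTE nsq) ?epq //.
have [c [pc /agreeP ac]] := exist_any pF.
have cs : c s = g s by rewrite ac ?ffunE // !inE eqxx.
have cp : c p = g s by rewrite ac ?ffunE // !inE eqxx ?orbT.
have cq : c q = g s by rewrite ac ?ffunE // !inE eqxx ?orbT.
have c1 := pair_class v1 pg pc gsp (etrans cs (esym cp)).
have c2 := pair_class v2 pc pd (etrans cs (esym cq)) dsq.
rewrite /reconf in c1 c2 *; exact: connect_trans c1 c2.
Qed.

Lemma disj x1 y1 u1 x2 y2 u2 (g d : col) : VP x1 y1 u1 -> VP x2 y2 u2 ->
  x1 \notin [set x2; y2] -> y1 \notin [set x2; y2] ->
  proper_colouring e g -> proper_colouring e d -> g x1 = g y1 -> d x2 = d y2 ->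
  reconf e g d.
Proof.
move=> v1 v2 n1 n2 pg pd gxy dxy.
set a := g x1.
have [b ba _] := other_colour a (D_pos v1).
have n3 : x2 \notin [set x1; y1].
  by move: n1 n2; rewrite !inE !negb_or => /andP [H1 _] /andP [H2 _]; rewrite eq_sym H1 eq_sym H2.
have n4 : y2 \notin [set x1; y1].
  by move: n1 n2; rewrite !inE !negb_or => /andP [_ H1] /andP [_ H2]; rewrite eq_sym H1 eq_sym H2.
set phi : col := [ffun v => if v \in [set x1; y1] then a else b].
have pphi : prop_on ([set x1; y1] :|: [set x2; y2]) phi.
  apply/prop_onP => u v /setUP [uA|uB] /setUP [vA|vB] euv.
  - by rewrite (pair_nonadj v1 uA vA) in euv.
  - have vA : v \notin [set x1; y1] by move: vB n3 n4; rewrite !inE => /orP [] /eqP ->.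
    by rewrite /phi !ffunE uA (negbTE vA) eq_sym.
  - have uA : u \notin [set x1; y1] by move: uB n3 n4; rewrite !inE => /orP [] /eqP ->.
    by rewrite /phi !ffunE vA (negbTE uA).
  - by rewrite (pair_nonadj v2 uB vB) in euv.
have [c [pc /agreeP ac]] := exist_any pphi.
have cx1 : c x1 = a by rewrite ac ?ffunE ?inE ?eqxx.
have cy1 : c y1 = a by rewrite ac ?ffunE ?inE ?eqxx ?orbT.
have cx2 : c x2 = b by rewrite ac ?ffunE ?(negbTE n3) // !inE eqxx ?orbT.
have cy2 : c y2 = b by rewrite ac ?ffunE ?(negbTE n4) // !inE eqxx ?orbT.
have c1 := pair_class v1 pg pc gxy (etrans cx1 (esym cy1)).
have c2 := pair_class v2 pc pd (etrans cx2 (esym cy2)) dxy.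
rewrite /reconf in c1 c2 *; exact: connect_trans c1 c2.
Qed.

Lemma unfrozen_pair (c : col) : proper_colouring e c -> unfrozen e c ->
  exists x, exists y, exists u, VP x y u /\ c x = c y.
Proof.
move=> pc /existsP [u]; rewrite /frozen_at => /forallPn [a].
rewrite negb_imply => /andP [au /existsPn noa].
set N := [set w | e u w].
have cN : #|N| = D by rewrite -(ereg u).
have sub : c @: N \subset ~: [set c u; a].
  apply/subsetP => z /imsetP [w]; rewrite inE => euw ->.
  rewrite !inE negb_or; apply/andP; split.
    move: pc; rewrite proper_onT => /prop_onP /(_ u w (in_setT _) (in_setT _) euw).
    by rewrite eq_sym.
  by move: (noa w); rewrite euw.
have cC : #|[set c u; a]| + #|~: [set c u; a]| = D.+1 by rewrite cardsC card_ord.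
case: (boolP [forall x in N, forall y in N, (c x == c y) ==> (x == y)]) => [inj|].
  have : #|c @: N| = #|N|.
    apply: card_in_imset => x y xN yN /eqP E.
    by move/forall_inP: inj => /(_ x xN) /forall_inP /(_ y yN) /implyP /(_ E) /eqP.
  move: (subset_leq_card sub) cC; rewrite cards2 eq_sym au cN => H1 H2 H3.
  lia.
move=> /forall_inPn [x xN] /forall_inPn [y yN]; rewrite negb_imply => /andP [/eqP cxy xy].
exists x, y, u; split => //.
move: xN yN; rewrite !inE => eux euy; rewrite /VP xy eux euy /= andbT.
apply/negP => exy; move: pc; rewrite proper_onT => /prop_onP /(_ x y (in_setT _) (in_setT _) exy).
by rewrite cxy eqxx.
Qed.

End Recol.

Theorem mainTheorem10 (T : finType) (e : rel T) (D : nat)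
    (alpha beta : {ffun T -> 'I_D.+1}) :
  simple_graph e -> k_connected e 3 -> regular e D ->
  proper_colouring e alpha -> proper_colouring e beta ->
  unfrozen e alpha -> unfrozen e beta ->
  reconf e alpha beta.
Proof.
move=> [esymm eirr] k3 reg pa pb ua ub.
have [x1 [y1 [u1 [v1 e1]]]] := unfrozen_pair reg pa ua.
have [x2 [y2 [u2 [v2 e2]]]] := unfrozen_pair reg pb ub.
case: (boolP ((x1 \notin [set x2; y2]) && (y1 \notin [set x2; y2]))) => [/andP [n1 n2]|].
  exact: (disj esymm eirr reg k3 v1 v2 n1 n2 pa pb e1 e2).
rewrite negb_and !negbK !inE => /orP [/orP [/eqP E|/eqP E]|/orP [/eqP E|/eqP E]];
  move: v1 e1; rewrite E => v1 e1.
- exact: (shared esymm eirr reg k3 v1 v2 pa pb e1 e2).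
- exact: (shared esymm eirr reg k3 v1 (VP_sym esymm v2) pa pb e1 (esym e2)).
- exact: (shared esymm eirr reg k3 (VP_sym esymm v1) v2 pa pb (esym e1) e2).
- exact: (shared esymm eirr reg k3 (VP_sym esymm v1) (VP_sym esymm v2) pa pb (esym e1) (esym e2)).
Qed.
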